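(* Suppose that a graph property $\Pi$ has a canonical size-oblivious $\varepsilon$-tester with sample complexity $s=s(\varepsilon)$. Then for every $n\ge s^4$ and every $n$-vertex graph $G$ which is $\varepsilon$-far from $\Pi$, if $U$ is chosen uniformly at random from the $s^4$-element subsets of $V(G)$, then $\mathbb{P}[G[U]\in\Pi]\le e^{-\Omega(s)}$, where the constant implicit in $\Omega$ is absolute (independent of $\Pi$, $\varepsilon$, $n$ and $G$).
   Context: Dense graph model: graphs are given as adjacency matrices; an $n$-vertex graph is $\varepsilon$-far from $\Pi$ if at least $\varepsilon n^2$ adjacency-matrix entries must be changed to obtain a graph in $\Pi$. An $\varepsilon$-tester for $\Pi$ accepts graphs in $\Pi$ with probability at least $2/3$ and rejects graphs $\varepsilon$-far from $\Pi$ with probability at least $2/3$. A tester is canonical if it samples a uniformly random set of $s$ vertices, queries all pairs among them, and decides based only on the isomorphism class of the induced subgraph on the sample; $s$ is its sample complexity. It is size-oblivious if its operation depends only on $\varepsilon$, not on the number of vertices $n$ (so here $s$ depends only on $\varepsilon$). $G[U]$ denotes the subgraph of $G$ induced on $U$. *)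

(* Defs.v *)
From mathcomp Require Import all_boot.
From mathcomp Require Import fingroup perm.
From Stdlib Require Import Reals.

Set Implicit Arguments.
Unset Strict Implicit.
Unset Printing Implicit Defensive.

Record sgraph (n : nat) := SGraph {
  adj : rel 'I_n ;
  adj_sym : symmetric adj ;
  adj_irr : irreflexive adj }.
Arguments adj {n}.

Definition graph_pred := forall k : nat, sgraph k -> bool.

Definition iso n (G H : sgraph n) : Prop :=
  exists s : {perm 'I_n}, forall i j, adj H (s i) (s j) = adj G i j.

Definition graph_property (P : graph_pred) : Prop :=
  forall n (G H : sgraph n), iso G H -> P n G = P n H.

Lemma induced_sym n (G : sgraph n) (U : {set 'I_n}) :
  symmetric (fun i j : 'I_#|U| => adj G (enum_val i) (enum_val j)).
Proof. by move=> i j; rewrite /= (adj_sym G). Qed.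

Lemma induced_irr n (G : sgraph n) (U : {set 'I_n}) :
  irreflexive (fun i j : 'I_#|U| => adj G (enum_val i) (enum_val j)).
Proof. by move=> i; rewrite /= (adj_irr G). Qed.

Definition induced n (G : sgraph n) (U : {set 'I_n}) : sgraph #|U| :=
  @SGraph #|U| _ (@induced_sym n G U) (@induced_irr n G U).

Definition mdist n (G H : sgraph n) : nat :=
  #|[set p : 'I_n * 'I_n | adj G p.1 p.2 != adj H p.1 p.2]|.

Definition far (P : graph_pred) (eps : R) n (G : sgraph n) : Prop :=
  forall H : sgraph n, P n H -> (eps * INR (muln n n) <= INR (mdist G H))%R.

Definition sample_prob (Q : graph_pred) n (k : nat) (G : sgraph n) : R :=
  (INR #|[set U : {set 'I_n} | (#|U| == k) && Q #|U| (induced G U)]|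
   / INR 'C(n, k))%R.

(* D is (the decision rule of) a canonical size-oblivious eps-tester for P with
   sample complexity s: D is evaluated on s-vertex samples, depends only on the
   isomorphism class of the sample, is the same for every n, and for every
   n >= s it accepts graphs in P w.p. >= 2/3 and rejects eps-far graphs w.p. >= 2/3. *)
Definition canonical_tester (P : graph_pred) (eps : R) (s : nat) (D : graph_pred) : Prop :=
  (forall G H : sgraph s, iso G H -> D s G = D s H) /\
  (forall n (G : sgraph n), s <= n ->
     (P n G -> (2 / 3 <= sample_prob D s G)%R) /\
     (far P eps G -> (sample_prob D s G <= 1 / 3)%R)).

(* Main.v *)
Require Import Defs.
From mathcomp Require Import all_boot.
From mathcomp Require Import fingroup perm.
From Stdlib Require Import Reals.
From mathcomp Require Import zify.
From Stdlib Require Import Lra.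

Set Implicit Arguments. Unset Strict Implicit. Unset Printing Implicit Defensive.

Module Helpers.
Import ssrnat.

Lemma lexp m n e : m <= n -> m ^ e <= n ^ e.
Proof. move=> h; elim: e => [|e IH] //; rewrite !expnS; exact: leq_mul. Qed.

Lemma bern b c k : (b + c) ^ k.+1 <= (b + c) * c ^ k + k * b * (b + c) ^ k.
Proof.
elim: k => [|k IH]; first by rewrite expn1 !expn0; lia.
have hY : c ^ k <= (b + c) ^ k by rewrite lexp // leq_addl.
move: IH hY; rewrite !expnS.
set X := (b + c) ^ k; set Y := c ^ k => IH hY. nia.
Qed.

Lemma ffact_ge k n : (n - k) ^ k <= n ^_ k.
Proof.
elim: k n => [|k IH] n; first by rewrite expn0 ffactn0.
rewrite ffactnS expnS.
have := IH n.-1. have -> : n.-1 - k = n - k.+1 by lia.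
move=> h. apply: leq_mul => //.
lia.
Qed.

Lemma ffact_le k n : n ^_ k <= n ^ k.
Proof.
elim: k n => [|k IH] n; first by rewrite expn0 ffactn0.
rewrite ffactnS expnS. apply: leq_mul => //. apply: leq_trans (IH _) _.
apply lexp; lia. 
Qed.

Lemma ffact_mono k m n : m <= n -> m ^_ k <= n ^_ k.
Proof.
elim: k m n => [|k IH] m n h; first by rewrite !ffactn0.
rewrite !ffactnS. apply: leq_mul => //. apply: IH. lia.
Qed.

Lemma ffactD a b n : n ^_ (a + b) = n ^_ a * (n - a) ^_ b.
Proof.
elim: a n => [|a IH] n; first by rewrite ffactn0 mul1n subn0.
rewrite addSn !ffactnS IH mulnA. congr (_ * _ ^_ _). lia.
Qed.

Lemma ffact_blocks s k m : m ^_ (k * s) <= (m ^_ s) ^ k.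
Proof.
elim: k m => [|k IH] m; first by rewrite mul0n ffactn0 expn0.
rewrite mulSn ffactD expnS. apply: leq_mul => //.
apply: leq_trans (IH _) _. apply: lexp. apply: ffact_mono. lia.
Qed.

Lemma pow_close n j : 4 * j * j <= n -> 0 < n -> 3 * n ^ j <= 4 * (n - j) ^ j.
Proof.
move=> h n0. have hjn : j <= n by nia.
have := bern j (n - j) j. have -> : j + (n - j) = n by lia.
rewrite expnS => hb.
have : n * (3 * n ^ j) <= n * (4 * (n - j) ^ j).
  move: hb; set X := n ^ j; set Y := (n - j) ^ j => hb.
  have := leq_mul h (leqnn X). lia.
by rewrite leq_pmul2l.
Qed.

Lemma key_bin s k n m : k * s <= m -> m <= n -> 4 * (k * s) * (k * s) <= n -> 0 < n ->
  3 * 'C(n, s) ^ k * 'C(n - k * s, m - k * s) <= 4 * 'C(m, s) ^ k * 'C(n, m).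
Proof.
set j := k * s => hjm hmn hn n0.
have e1 : 'C(n,s)^k * s`!^k = (n^_s)^k by rewrite -expnMn bin_ffact.
have e2 : 'C(m,s)^k * s`!^k = (m^_s)^k by rewrite -expnMn bin_ffact.
have e3 : 'C(n-j,m-j) * (m-j)`! = (n-j)^_(m-j) by rewrite bin_ffact.
have e4 : 'C(n,m) * m`! = n^_j * (n-j)^_(m-j).
  by rewrite bin_ffact -ffactD; congr (_ ^_ _); lia.
have e5 : m`! = m^_j * (m-j)`! by rewrite ffact_fact.
have main : 3 * (n^_s)^k * m^_j <= 4 * (m^_s)^k * n^_j.
  have h1 : (n^_s)^k <= n ^ j by rewrite /j mulnC expnM; apply: lexp; apply: ffact_le.
  have h2 : m^_j <= (m^_s)^k by apply: ffact_blocks.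
  have h3 := pow_close hn n0.
  have h4 : (n - j) ^ j <= n ^_ j by apply: ffact_ge.
  move: h1 h2 h3 h4. set A := (n^_s)^k; set B := m^_j; set C := (m^_s)^k; set D := n^_j.
  set E := n ^ j; set F := (n - j) ^ j. move=> h1 h2 h3 h4.
  have : 3 * A * B <= 3 * E * C by apply: leq_mul; [apply: leq_mul|].
  have : 3 * E * C <= 4 * F * C by apply: leq_mul => //; rewrite -mulnA mulnC.
  have : 4 * F * C <= 4 * D * C by apply: leq_mul => //; apply: leq_mul.
  lia.
have P0 : 0 < s`!^k * (m-j)`! * m`! by rewrite !muln_gt0 expn_gt0 !fact_gt0.
rewrite -(leq_pmul2r P0).
have -> : 3 * 'C(n, s) ^ k * 'C(n - j, m - j) * (s`! ^ k * (m - j)`! * m`!)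
   = 3 * (n^_s)^k * m^_j * ((n-j)^_(m-j) * (m-j)`!).
  rewrite -e1 -e3 e5. set a := 'C(n, s) ^ k. nia.
have -> : 4 * 'C(m, s) ^ k * 'C(n, m) * (s`! ^ k * (m - j)`! * m`!)
   = 4 * (m^_s)^k * n^_j * ((n-j)^_(m-j) * (m-j)`!).
  rewrite -e2. have -> : 4 * 'C(m, s) ^ k * 'C(n, m) * (s`! ^ k * (m - j)`! * m`!)
     = 4 * ('C(m, s) ^ k * s`! ^ k) * ('C(n, m) * m`!) * (m - j)`! by nia.
  rewrite e4. nia.
by apply: leq_mul.
Qed.

Lemma binw s w : 6 <= s -> s ^ 4 <= w + s * s - s -> 6 * 'C(w, s) >= 5 * 'C(s ^ 4, s).
Proof.
move=> s6 hw. set m := s ^ 4.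
have hsm : s * s <= m by rewrite /m; nia.
set X := m ^ s; set Y := (m - s * s) ^ s.
have hXY : 5 * X <= 6 * Y.
  have := bern (s * s) (m - s * s) s. have -> : s * s + (m - s * s) = m by lia.
  rewrite expnS -/X -/Y => hb.
  have e : m = s * (s * (s * s)) by rewrite /m; lia.
  have h1 : s * X <= s * Y + X.
    have t0 : 0 < s * (s * s) by nia.
    rewrite -(leq_pmul2l t0). move: hb. rewrite {1 2}e. nia.
  have : s * (5 * X) <= s * (6 * Y) by nia.
  by rewrite leq_pmul2l //; lia.
have f0 : 0 < s`! by apply: fact_gt0.
rewrite -(leq_pmul2r f0) -!mulnA !bin_ffact.
apply: leq_trans (_ : 5 * X <= _).
  by rewrite leq_mul2l /X ffact_le orbT.
apply: leq_trans hXY _. rewrite leq_mul2l; apply/orP; right.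
apply: leq_trans (ffact_ge _ _). apply: lexp. lia.
Qed.

Lemma pow_aux k : 2 <= k -> 44 * 242 ^ k <= 30 * 300 ^ k.
Proof.
elim: k => [|k IH] // hk.
case: (ltnP k 2) => hk2.
  have -> : k = 1 by lia. rewrite !expnS expn0; lia.
have := IH hk2. rewrite !expnS. nia.
Qed.

Lemma fin_ineq k s b C : 2 <= k -> s <= k.*2.+1 ->
  3 ^ k.+1 * b <= 4 * 2 ^ k * C -> 11 ^ s * b <= 10 ^ s * C.
Proof.
move=> hk hs h.
have h1 : 11 ^ k.*2.+1 * b <= 10 ^ k.*2.+1 * C.
  have p0 : 0 < 3 ^ k.+1 by rewrite expn_gt0.
  rewrite -(leq_pmul2l p0) !mulnA (mulnC (3 ^ k.+1)) -mulnA.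
  apply: leq_trans (_ : 11 ^ k.*2.+1 * (4 * 2 ^ k * C) <= _); first by rewrite leq_mul2l h orbT.
  rewrite !mulnA leq_mul2r; apply/orP; right.
  have := pow_aux hk. rewrite -addnn !expnS !expnD.
  have -> : 242 = 2 * 11 * 11 by []. have -> : 300 = 3 * 10 * 10 by [].
  rewrite !expnMn. nia.
have e : k.*2.+1 = s + (k.*2.+1 - s) by lia.
move: h1; rewrite e !expnD. set E := k.*2.+1 - s => h1.
have hF : 10 ^ E <= 11 ^ E by apply: lexp.
have F0 : 0 < 10 ^ E by rewrite expn_gt0.
rewrite -(leq_pmul2l F0).
move: h1 hF F0; set A := 11 ^ s; set B := 11 ^ E; set D := 10 ^ s; set F := 10 ^ E => h1 hF F0.
apply: leq_trans (_ : B * (A * b) <= _); first by rewrite leq_mul2r hF orbT.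
move: h1. rewrite !mulnA (mulnC B A) (mulnC F D). done.
Qed.

Section Comb.
Variables (n s : nat) (a : pred {set 'I_n}).
Definition ok (W S : {set 'I_n}) := (S \subset W) && (#|S| == s) && a S.
Fixpoint T (W : {set 'I_n}) k := if k is k'.+1 then \sum_(S | ok W S) T (W :\: S) k' else 1.
Definition N W := #|[set S | ok W S]|.

Lemma sum_const_pred (P : pred {set 'I_n}) c : \sum_(S | P S) c = #|[set S | P S]| * c.
Proof. rewrite -sum_nat_const; apply: eq_bigl => S; by rewrite inE. Qed.

Lemma T_upper W k : T W k <= #|[set S : {set 'I_n} | (#|S| == s) && a S]| ^ k.
Proof.
elim: k W => [|k IH] W /=; first by rewrite expn0.
apply: leq_trans (_ : _ <= \sum_(S | ok W S) #|[set S : {set 'I_n} | (#|S| == s) && a S]| ^ k) _.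
  by apply: leq_sum => S _; apply: IH.
rewrite sum_const_pred expnS leq_mul2r; apply/orP; right.
apply: subset_leq_card; apply/subsetP => S; rewrite !inE /ok.
by case/andP => /andP [_ ->] ->.
Qed.

Lemma T_lower c B k (W : {set 'I_n}) : (forall W' : {set 'I_n}, W' \subset W -> #|W| <= #|W'| + k * s -> B <= c * N W') ->
  B ^ k <= c ^ k * T W k.
Proof.
elim: k W => [|k IH] W h /=; first by rewrite !expn0.
have hB : B <= c * N W by apply: h => //; lia.
have : \sum_(S | ok W S) B ^ k <= \sum_(S | ok W S) c ^ k * T (W :\: S) k.
  apply: leq_sum => S /andP [/andP [sSW /eqP cS] aS]; apply: IH => W' sW' cW'.
  apply: h; first by apply: subset_trans sW' (subsetDl _ _).
  have : #|W| = #|W :\: S| + s by rewrite cardsD (setIidPr sSW) cS subnK // -cS subset_leq_card.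
  lia.
rewrite sum_const_pred -big_distrr /= -/(N W) => h2.
rewrite expnS (expnS c) -mulnA. apply: leq_trans (_ : c * (N W * B ^ k) <= _).
  by rewrite mulnA leq_mul2r hB orbT.
by rewrite leq_mul2l h2 orbT.
Qed.


Lemma reidx (F : {set 'I_n} -> nat) (S W : {set 'I_n}) m : S \subset W -> #|S| <= m ->
  \sum_(U : {set 'I_n} | (U \subset W) && (#|U| == m) && (S \subset U)) F (U :\: S)
  = \sum_(U : {set 'I_n} | (U \subset W :\: S) && (#|U| == m - #|S|)) F U.
Proof.
move=> sSW hm.
rewrite (reindex_onto (fun U : {set 'I_n} => U :|: S) (fun U : {set 'I_n} => U :\: S)); last first.
  move=> U /andP [_ sSU]; apply/setP => x; rewrite !inE.
  by case: (boolP (x \in S)) => xS //=; rewrite ?andbT ?orbF ?orbT // (subsetP sSU).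
apply: eq_big => U; last first.
  by move=> /andP [_ /eqP] ->.
rewrite setDUl setDv setU0 subsetUr andbT.
case: (boolP [disjoint U & S]) => dj.
  rewrite (setDidPl dj) eqxx andbT subsetD dj andbT subUset sSW andbT.
  rewrite cardsU (disjoint_setI0 dj) cards0 subn0.
  case: (U \subset W) => //=. by rewrite -[X in _ = X](eqn_add2r #|S|) subnK.
rewrite subsetD (negbTE dj) andbF.
apply/negbTE; apply/negP => /andP [_ /eqP h]. by move/setDidPl: h; rewrite (negbTE dj).
Qed.

Lemma T_sum k (W : {set 'I_n}) m : k * s <= m ->
  \sum_(U : {set 'I_n} | (U \subset W) && (#|U| == m)) T U k = T W k * 'C(#|W| - k * s, m - k * s).
Proof.
elim: k W m => [|k IH] W m hm /=.
  rewrite mul0n !subn0 mul1n sum1_card -cards_draws; apply: eq_card => U; by rewrite inE.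
rewrite (exchange_big_dep (ok W)) /=; last first.
  move=> U S /andP [sUW _] /andP [/andP [sSU cS] aS].
  by rewrite /ok (subset_trans sSU sUW) cS aS.
rewrite big_distrl /=. apply: eq_bigr => S /andP [/andP [sSW /eqP cS] aS].
have hsm : s <= m by move: hm; rewrite mulSn; lia.
rewrite (eq_bigl (fun U : {set 'I_n} => (U \subset W) && (#|U| == m) && (S \subset U))); last first.
  by move=> U; rewrite /ok cS eqxx aS !andbT.
rewrite (reidx (fun X => T X k)) // ?cS // IH; last by move: hm; rewrite mulSn; lia.
congr (_ * 'C(_, _)).
    by rewrite cardsD (setIidPr sSW) cS mulSn subnDA.
by rewrite mulSn subnDA.
Qed.

Lemma N_sub (U W : {set 'I_n}) : W \subset U -> N U <= N W + ('C(#|U|, s) - 'C(#|W|, s)).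
Proof.
move=> sWU.
set XU := [set S : {set 'I_n} | S \subset U & #|S| == s].
set XW := [set S : {set 'I_n} | S \subset W & #|S| == s].
have sX : XW \subset XU.
  apply/subsetP => S; rewrite !inE => /andP [sSW ->]; by rewrite (subset_trans sSW sWU).
have : [set S | ok U S] \subset [set S | ok W S] :|: (XU :\: XW).
  apply/subsetP => S; rewrite !inE /ok => /andP [/andP [sSU cS] aS].
  by rewrite sSU cS aS /= !andbT; case: (S \subset W).
move/subset_leq_card => h; apply: leq_trans h _.
apply: leq_trans (leq_card_setU _ _) _. rewrite leq_add2l.
by rewrite cardsD (setIidPr sX) /XU /XW !cards_draws.
Qed.

End Comb.

Lemma D_iso (s : nat) (D : graph_pred) (HD : forall G H : sgraph s, iso G H -> D s G = D s H)
  a b (G1 : sgraph a) (G2 : sgraph b) (f : 'I_a -> 'I_b) :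
  a = s -> b = s -> injective f -> (forall i j, adj G2 (f i) (f j) = adj G1 i j) -> D a G1 = D b G2.
Proof.
move=> ea eb; subst a b => fi hf. apply: HD. exists (perm fi) => i j. by rewrite !permE hf.
Qed.

Lemma cnt_le (s : nat) (D : graph_pred) (HD : forall G H : sgraph s, iso G H -> D s G = D s H)
  n (G : sgraph n) (U : {set 'I_n}) :
  #|[set T : {set 'I_#|U|} | (#|T| == s) && D #|T| (induced (induced G U) T)]|
  <= N s (fun S : {set 'I_n} => D #|S| (induced G S)) U.
Proof.
rewrite -(card_imset _ (imset_inj (@enum_val_inj _ (mem U)))).
apply: subset_leq_card; apply/subsetP => S /imsetP [T]; rewrite inE => /andP [/eqP cT hT] ->.
rewrite inE /ok.
have cS : #|[set enum_val x | x in T]| = s by rewrite card_imset // ; exact: enum_val_inj.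
rewrite [#|_| == s](introT eqP cS) andbT.
apply/andP; split.
  apply/subsetP => y /imsetP [x _ ->]; exact: enum_valP.
set S' := [set enum_val x | x in T].
suff <- : D #|T| (induced (induced G U) T) = D #|S'| (induced G S') by [].
pose g (i : 'I_#|T|) : 'I_n := enum_val (enum_val i).
have gS : forall i, g i \in S' by move=> i; apply: imset_f; apply: enum_valP.
pose f i := enum_rank_in (gS i) (g i).
have fK : forall i, enum_val (f i) = g i.
  move=> i; rewrite /f; exact: (enum_rankK_in (gS i) (gS i)).
apply: (@D_iso s D HD _ _ _ _ f cT cS).
  by move=> i j /(congr1 enum_val); rewrite !fK => /enum_val_inj /enum_val_inj.
by move=> i j /=; rewrite !fK.
Qed.

End Helpers.
Import Helpers.

Section RealAux.
Local Open Scope R_scope.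

Lemma le_third (a c : nat) : (0 < c)%nat -> INR a / INR c <= 1/3 -> (3 * a <= c)%nat.
Proof.
move=> /ltP c0 h. have hc := lt_0_INR _ c0.
have e : INR a = (INR a / INR c) * INR c by field; lra.
apply/leP; apply: INR_le. rewrite mult_INR.
have -> : INR 3 = 3 by simpl; lra.
nra.
Qed.

Lemma ge_twothird (a c : nat) : (0 < c)%nat -> 2/3 <= INR a / INR c -> (2 * c <= 3 * a)%nat.
Proof.
move=> /ltP c0 h. have hc := lt_0_INR _ c0.
have e : INR a = (INR a / INR c) * INR c by field; lra.
apply/leP; apply: INR_le. rewrite !mult_INR.
have -> : INR 3 = 3 by simpl; lra.
have -> : INR 2 = 2 by simpl; lra.
nra.
Qed.

Lemma final_real (b C s : nat) : (0 < C)%nat -> (expn 11 s * b <= expn 10 s * C)%nat ->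
  INR b / INR C <= exp (-(ln (11/10) * INR s)).
Proof.
move=> /ltP c0 /leP h. have hc := lt_0_INR _ c0.
have h' := le_INR _ _ h. rewrite !mult_INR in h'.
have pw : forall a k, INR (expn a k) = INR a ^ k.
  move=> a k; elim: k => [|k IH]; first by rewrite expn0.
  by rewrite expnS mult_INR IH.
rewrite !pw in h'.
rewrite exp_Ropp Rmult_comm.
have -> : exp (INR s * ln (11 / 10)) = (11/10) ^ s by rewrite -Rpower_pow; [done | lra].
move: h'. have -> : INR 11 = 11 by simpl; lra.
have -> : INR 10 = 10 by simpl; lra.
have eq : 11 ^ s = (11/10) ^ s * 10 ^ s by rewrite -Rpow_mult_distr; congr (_ ^ _); field.
rewrite eq. set q := (11/10) ^ s. set Y := 10 ^ s => h'.
have q0 : 0 < q by apply: pow_lt; lra.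
have Y0 : 0 < Y by apply: pow_lt; lra.
have h2 : INR b * q <= INR C by nra.
have e1 : INR b / INR C = (INR b * q) * / (INR C * q) by field; lra.
have e2 : / q = INR C * / (INR C * q) by field; lra.
rewrite e1 e2; apply: Rmult_le_compat_r => //.
left; apply: Rinv_0_lt_compat; nra.
Qed.
End RealAux.

Theorem lemma3p1 :
  exists c : R, (0 < c)%R /\ exists s0 : nat,
  forall (P : graph_pred), graph_property P ->
  forall (eps : R), (0 < eps)%R ->
  forall (s : nat), s0 <= s ->
  forall (D : graph_pred), canonical_tester P eps s D ->
  forall (n : nat), expn s 4 <= n ->
  forall (G : sgraph n), far P eps G ->
  (sample_prob P (expn s 4) G <= exp (- (c * INR s)))%R.
Proof.
exists (ln (11/10)). split.
  rewrite -ln_1. apply: ln_increasing; lra.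
exists 6 => P _ eps _ s s6 D [HD Ht] n hn G Gfar.
set m := expn s 4.
have em : m = s * (s * (s * s)) by rewrite /m !expnS expn0 muln1.
have hsm : s <= m.
  rewrite em leq_pmulr // !muln_gt0; lia.
have hsn : s <= n by lia.
set k := s./2.
have [hk1 hk2] : 2 * k <= s /\ s <= (2 * k).+1.
  by have := odd_double_half s; rewrite -/k -mul2n; case: (odd s) => /=; lia.
set a := fun S : {set 'I_n} => D #|S| (induced G S).
set A := #|[set S : {set 'I_n} | (#|S| == s) && a S]|.
have hA : 3 * A <= 'C(n, s).
  apply: le_third; first by rewrite bin_gt0.
  exact: (proj2 (Ht n G hsn) Gfar).
set Bad := [set U : {set 'I_n} | (#|U| == m) && P #|U| (induced G U)].
have hbadN : forall U, U \in Bad -> 2 * 'C(m, s) <= 3 * N s a U.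
  move=> U; rewrite inE => /andP [/eqP cU PU].
  have hsU : s <= #|U| by rewrite cU.
  have h1 := proj1 (Ht #|U| (induced G U) hsU) PU.
  have := ge_twothird _ h1. rewrite bin_gt0 hsU => /(_ isT).
  rewrite [in 'C(_, s)]cU => h2. apply: leq_trans h2 _. rewrite leq_mul2l; apply/orP; right.
  exact: (@cnt_le s D HD n G U).
have ss : s * s <= m.
  rewrite em. apply: leq_mul => //. apply: leq_pmulr. by rewrite muln_gt0; lia.
have hks : k * s <= m.
  apply: leq_trans ss. apply: leq_mul => //. lia.
have hlow : forall U, U \in Bad -> expn ('C(m, s)) k <= expn 2 k * T s a U k.
  move=> U hU. have h := hbadN U hU. move: hU; rewrite inE => /andP [/eqP cU _].
  apply: T_lower => W' sW' cW'.
  have h3 := N_sub s a sW'. rewrite cU in h3.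
  have h4 : 5 * 'C(m, s) <= 6 * 'C(#|W'|, s).
    apply: binw => //. rewrite -/m. 
    have : k * s + s <= s * s by nia.
    lia.
  lia.
have hsum : #|Bad| * expn ('C(m, s)) k <= expn 2 k * (T s a [set: 'I_n] k * 'C(n - k * s, m - k * s)).
  rewrite -sum_nat_const.
  apply: leq_trans (_ : \sum_(U in Bad) expn 2 k * T s a U k <= _).
    by apply: leq_sum => U hU; apply: hlow.
  rewrite -big_distrr leq_mul2l; apply/orP; right.
  have := @T_sum n s a k [set: 'I_n] m hks. rewrite cardsT card_ord => <-.
  rewrite big_mkcond [X in _ <= X]big_mkcond /=. apply: leq_sum => U _.
  case hU: (U \in Bad) => //. move: hU; rewrite inE => /andP [-> _].
  by rewrite subsetT.
have hTup := @T_upper n s a [set: 'I_n] k.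
have n0 : 0 < n by lia.
have h4 : 4 * (k * s) * (k * s) <= n.
  apply: leq_trans hn. rewrite -/m em.
  have t : 2 * (k * s) <= s * s by rewrite mulnA leq_mul2r hk1 orbT.
  have t2 := leq_mul t t.
  have -> : 4 * (k * s) * (k * s) = 2 * (k * s) * (2 * (k * s)) by nia.
  apply: leq_trans t2 _. by rewrite !mulnA.
have key := key_bin hks hn h4 n0.
set X := 'C(n - k * s, m - k * s). set Cm := 'C(m, s). set Cn := 'C(n, s).
have s1 : #|Bad| * expn Cm k <= expn 2 k * expn A k * X.
  apply: leq_trans hsum _. rewrite -mulnA leq_mul2l; apply/orP; right.
  by rewrite leq_mul2r hTup orbT.
have s2 : expn 3 k * expn A k <= expn Cn k by rewrite -expnMn; apply: lexp.
have s3 : expn 3 k.+1 * #|Bad| * expn Cm k <= 4 * expn 2 k * 'C(n, m) * expn Cm k.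
  have p1 := leq_mul (leqnn (3 * expn 3 k)) s1.
  have p2 := leq_mul (leq_mul (leqnn (expn 2 k)) s2) (leqnn (3 * X)).
  have p3 := leq_mul (leqnn (expn 2 k)) key.
  rewrite expnS. move: p1 p2 p3.
  set e3 := expn 3 k. set e2 := expn 2 k. set eA := expn A k. set eCm := expn Cm k.
  set eCn := expn Cn k. set B := #|Bad|. set Cnm := 'C(n, m). nia.
have cm0 : 0 < expn Cm k by rewrite expn_gt0 bin_gt0 hsm.
rewrite leq_pmul2r // in s3.
have s4 := fin_ineq (k := k) (s := s) _ _ s3.
rewrite /sample_prob. apply: final_real; first by rewrite bin_gt0.
apply: s4; first by lia.
by rewrite -mul2n.
Qed.
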